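(* There exist constants $0<M_1\le M_2<\infty$ such that \[M_1\le\inf_{b\in\Sigma(C,A,\gamma)}\ \inf_{x\in[y_1,\bar y]}\xi_b(x)\le\sup_{b\in\Sigma(C,A,\gamma)}\ \sup_{x\in[y_1,\bar y]}\xi_b(x)\le M_2.\]
   Context: Let $\sigma:\mathbb{R}\to\mathbb{R}$ be locally Lipschitz with $\underline\nu\le|\sigma(x)|\le\overline\nu$ for all $x$, for constants $0<\underline\nu\le\overline\nu<\infty$. For constants $A,\gamma>0$, $C\ge1$, let $\Sigma(C,A,\gamma)=\Sigma(C,A,\gamma,\sigma)$ be the set of locally Lipschitz $b:\mathbb{R}\to\mathbb{R}$ with $|b(x)|\le C(1+|x|)$ for all $x$ and $\frac{b(x)}{\sigma^2(x)}\operatorname{sgn}(x)\le-\gamma$ for all $|x|>A$. For $b$ in this class, $\rho_b(x)=\frac{1}{C_{b,\sigma}\sigma^2(x)}\exp\big(\int_0^x\frac{2b(y)}{\sigma^2(y)}\mathrm{d}y\big)$ is the invariant density ($C_{b,\sigma}$ normalizing). Fix $y_0\in\mathbb{R}$ and set $\xi_b(x):=2\int_{y_0}^x\frac{1}{\sigma^2(y)\rho_b(y)}\int_{-\infty}^y\rho_b(z)\,\mathrm{d}z\,\mathrm{d}y$. Here $y_0<y_1<\bar y$ are fixed real numbers. *)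

(* Defs.v *)
From Stdlib Require Import Reals Lra ClassicalEpsilon.
Open Scope R_scope.

Definition locally_lipschitz (f : R -> R) : Prop :=
  forall a b : R, exists L : R, forall x y : R,
    a <= x <= b -> a <= y <= b -> Rabs (f x - f y) <= L * Rabs (x - y).

Definition sgn (x : R) : R :=
  if Rlt_dec 0 x then 1 else if Rlt_dec x 0 then -1 else 0.

(* Oriented Riemann integral  int_a^b f  (value chosen classically;
   meaningful whenever f is Riemann integrable on [a,b], e.g. continuous). *)
Definition Rint (f : R -> R) (a b : R) : R :=
  epsilon (inhabits 0)
    (fun I => exists pr : Riemann_integrable f a b, RiemannInt pr = I).

Definition lim_at_minus_infty (g : R -> R) (l : R) : Prop :=
  forall eps, 0 < eps -> exists M, forall a, a <= M -> Rabs (g a - l) < eps.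

Definition lim_at_plus_infty (g : R -> R) (l : R) : Prop :=
  forall eps, 0 < eps -> exists M, forall a, M <= a -> Rabs (g a - l) < eps.

Definition Rint_minf (f : R -> R) (y : R) : R :=
  epsilon (inhabits 0) (fun I => lim_at_minus_infty (fun a => Rint f a y) I).

Definition Rint_pinf (f : R -> R) (y : R) : R :=
  epsilon (inhabits 0) (fun I => lim_at_plus_infty (fun a => Rint f y a) I).

Definition Rint_R (f : R -> R) : R := Rint_minf f 0 + Rint_pinf f 0.

Definition in_Sigma (C A gamma : R) (sigma b : R -> R) : Prop :=
  locally_lipschitz b /\
  (forall x, Rabs (b x) <= C * (1 + Rabs x)) /\
  (forall x, A < Rabs x -> b x / (sigma x) ^ 2 * sgn x <= - gamma).

Definition rho_unnorm (sigma b : R -> R) (x : R) : R :=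
  / (sigma x) ^ 2 * exp (Rint (fun y => 2 * b y / (sigma y) ^ 2) 0 x).

Definition C_bsigma (sigma b : R -> R) : R := Rint_R (rho_unnorm sigma b).

Definition rho (sigma b : R -> R) (x : R) : R :=
  rho_unnorm sigma b x / C_bsigma sigma b.

Definition xi (sigma b : R -> R) (y0 x : R) : R :=
  2 * Rint (fun y => / ((sigma y) ^ 2 * rho sigma b y) * Rint_minf (rho sigma b) y) y0 x.

(* Main.v *)
Require Import Defs.
From Stdlib Require Import Reals Lra ClassicalEpsilon Classical FunctionalExtensionality.
From Coquelicot Require Import Coquelicot.
Open Scope R_scope.

Definition ctn (f:R->R) := forall x, continuous f x.

Lemma ctn_mult f g : ctn f -> ctn g -> ctn (fun x => f x * g x).
Proof. intros Hf Hg x. exact (continuous_mult f g x (Hf x) (Hg x)). Qed.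

Lemma ctn_plus f g : ctn f -> ctn g -> ctn (fun x => f x + g x).
Proof. intros Hf Hg x. exact (continuous_plus f g x (Hf x) (Hg x)). Qed.

Lemma ctn_opp f : ctn f -> ctn (fun x => - f x).
Proof. intros Hf x. exact (continuous_opp f x (Hf x)). Qed.

Lemma ctn_exp f : ctn f -> ctn (fun x => exp (f x)).
Proof. intros Hf x. exact (continuous_exp_comp f x (Hf x)). Qed.

Lemma ctn_inv f : ctn f -> (forall x, f x <> 0) -> ctn (fun x => / f x).
Proof. intros Hf H x. exact (continuous_Rinv_comp f x (Hf x) (H x)). Qed.

Lemma ctn_const c : ctn (fun _ => c).
Proof. intros x. apply continuous_const. Qed.

Lemma ctn_ext f g : (forall x, f x = g x) -> ctn f -> ctn g.
Proof. intros E H x. exact (continuous_ext f g x E (H x)). Qed.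

Lemma ll_cont f : locally_lipschitz f -> ctn f.
Proof.
intros H x. apply continuity_pt_filterlim.
destruct (H (x-1) (x+1)) as [L HL].
intros eps Heps.
exists (Rmin 1 (eps/(Rabs L+1))). split.
- apply Rmin_pos; [lra|]. apply Rdiv_lt_0_compat; [lra|]. pose proof (Rabs_pos L); lra.
- intros y [_ Hy]. unfold R_dist in *. simpl in *. unfold R_dist in Hy.
  assert (H1: Rabs (y - x) < 1) by (eapply Rlt_le_trans; [exact Hy| apply Rmin_l]).
  assert (H2: Rabs (y - x) < eps/(Rabs L+1)) by (eapply Rlt_le_trans; [exact Hy| apply Rmin_r]).
  apply Rabs_def2 in H1. destruct H1 as [H1a H1b].
  specialize (HL y x ltac:(lra) ltac:(lra)).
  pose proof (Rabs_pos L). pose proof (Rabs_pos (y-x)).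
  assert (L * Rabs (y-x) <= Rabs L * Rabs (y-x)) by (apply Rmult_le_compat_r; [lra| apply RRle_abs]).
  assert (Rabs L * Rabs (y - x) <= (Rabs L + 1) * Rabs (y-x)) by nra.
  assert ((Rabs L + 1) * Rabs (y-x) < (Rabs L + 1) * (eps/(Rabs L+1))) by (apply Rmult_lt_compat_l; lra).
  replace ((Rabs L + 1) * (eps/(Rabs L+1))) with eps in * by (field; lra).
  unfold Rdist. lra.
Qed.

Lemma ctn_exR f a b : ctn f -> ex_RInt f a b.
Proof. intros H; apply (@ex_RInt_continuous R_CompleteNormedModule); intros; apply H. Qed.

Lemma Rint_RInt f a b : ctn f -> Rint f a b = RInt f a b.
Proof.
intros H. unfold Rint.
pose proof (ex_RInt_Reals_0 _ _ _ (ctn_exR f a b H)) as pr.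
destruct (epsilon_spec (inhabits 0) (fun I => exists pr : Riemann_integrable f a b, RiemannInt pr = I)) as [pr' E].
 exists (RiemannInt pr); exists pr; reflexivity.
rewrite <- E. symmetry; apply RInt_Reals.
Qed.

Lemma Chasles f a b c : ctn f -> RInt f a b + RInt f b c = RInt f a c.
Proof. intros H. apply (RInt_Chasles f a b c); apply ctn_exR; auto. Qed.

Lemma RInt_cst c a b : RInt (fun _ => c) a b = (b - a) * c.
Proof. rewrite RInt_const. reflexivity. Qed.

Lemma RInt_le_c f a b K : ctn f -> a <= b -> (forall x, a < x < b -> f x <= K) -> RInt f a b <= (b-a)*K.
Proof. intros H ab HK. rewrite <- RInt_cst. apply RInt_le; auto; try apply ctn_exR; auto.
apply ctn_const. Qed.

Lemma RInt_ge_c f a b K : ctn f -> a <= b -> (forall x, a < x < b -> K <= f x) -> (b-a)*K <= RInt f a b.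
Proof. intros H ab HK. rewrite <- RInt_cst. apply RInt_le; auto; try apply ctn_exR; auto.
apply ctn_const. Qed.

Lemma RInt_div f a b Z : ctn f -> RInt (fun x => f x / Z) a b = RInt f a b / Z.
Proof. intros H. rewrite (RInt_ext _ (fun x => scal (/Z) (f x))).
 rewrite (@RInt_scal R_CompleteNormedModule). unfold scal; simpl; unfold mult; simpl. unfold Rdiv. ring.
 apply ctn_exR; auto.
 intros; unfold scal; simpl; unfold mult; simpl. unfold Rdiv; ring.
Qed.

Lemma RInt_mono_left f a a0 y : ctn f -> (forall z, 0 <= f z) -> a <= a0 -> RInt f a0 y <= RInt f a y.
Proof. intros H P aa. rewrite <- (Chasles f a a0 y H).
 assert (0 <= RInt f a a0) by (apply RInt_ge_0; auto; apply ctn_exR; auto). lra. Qed.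

Lemma RInt_mono_right f y a a0 : ctn f -> (forall z, 0 <= f z) -> a0 <= a -> RInt f y a0 <= RInt f y a.
Proof. intros H P aa. rewrite <- (Chasles f y a0 a H).
 assert (0 <= RInt f a0 a) by (apply RInt_ge_0; auto; apply ctn_exR; auto). lra. Qed.

Lemma lim_m_unique g l1 l2 : lim_at_minus_infty g l1 -> lim_at_minus_infty g l2 -> l1 = l2.
Proof.
intros H1 H2. destruct (Req_dec l1 l2) as [|N]; auto. exfalso.
set (e := Rabs (l1 - l2)/2). assert (He: 0 < e) by (unfold e; apply Rdiv_lt_0_compat; [apply Rabs_pos_lt; lra| lra]).
destruct (H1 e He) as [M1 HM1]. destruct (H2 e He) as [M2 HM2].
specialize (HM1 (Rmin M1 M2) (Rmin_l _ _)). specialize (HM2 (Rmin M1 M2) (Rmin_r _ _)).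
assert (Rabs (l1 - l2) <= Rabs (g (Rmin M1 M2) - l1) + Rabs (g (Rmin M1 M2) - l2)).
{ replace (l1 - l2) with (-(g (Rmin M1 M2) - l1) + (g (Rmin M1 M2) - l2)) by ring.
  eapply Rle_trans; [apply Rabs_triang|]. rewrite Rabs_Ropp; lra. }
unfold e in *; lra.
Qed.

Lemma lim_p_unique g l1 l2 : lim_at_plus_infty g l1 -> lim_at_plus_infty g l2 -> l1 = l2.
Proof.
intros H1 H2. destruct (Req_dec l1 l2) as [|N]; auto. exfalso.
set (e := Rabs (l1 - l2)/2). assert (He: 0 < e) by (unfold e; apply Rdiv_lt_0_compat; [apply Rabs_pos_lt; lra| lra]).
destruct (H1 e He) as [M1 HM1]. destruct (H2 e He) as [M2 HM2].
specialize (HM1 (Rmax M1 M2) (Rmax_l _ _)). specialize (HM2 (Rmax M1 M2) (Rmax_r _ _)).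
assert (Rabs (l1 - l2) <= Rabs (g (Rmax M1 M2) - l1) + Rabs (g (Rmax M1 M2) - l2)).
{ replace (l1 - l2) with (-(g (Rmax M1 M2) - l1) + (g (Rmax M1 M2) - l2)) by ring.
  eapply Rle_trans; [apply Rabs_triang|]. rewrite Rabs_Ropp; lra. }
unfold e in *; lra.
Qed.

Lemma Rint_minf_eq f y L : ctn f -> lim_at_minus_infty (fun a => RInt f a y) L -> Rint_minf f y = L.
Proof.
intros Hf HL. assert (H': lim_at_minus_infty (fun a => Rint f a y) L).
{ intros eps He. destruct (HL eps He) as [M HM]. exists M. intros a Ha. rewrite Rint_RInt; auto. }
unfold Rint_minf. apply (lim_m_unique (fun a => Rint f a y)); auto.
apply (epsilon_spec (inhabits 0) (fun I => lim_at_minus_infty (fun a => Rint f a y) I)). eauto.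
Qed.

Lemma Rint_pinf_eq f y L : ctn f -> lim_at_plus_infty (fun a => RInt f y a) L -> Rint_pinf f y = L.
Proof.
intros Hf HL. assert (H': lim_at_plus_infty (fun a => Rint f y a) L).
{ intros eps He. destruct (HL eps He) as [M HM]. exists M. intros a Ha. rewrite Rint_RInt; auto. }
unfold Rint_pinf. apply (lim_p_unique (fun a => Rint f y a)); auto.
apply (epsilon_spec (inhabits 0) (fun I => lim_at_plus_infty (fun a => Rint f y a) I)). eauto.
Qed.

Lemma lim_minus_exists (f:R->R) y U : ctn f -> (forall z, 0 <= f z) ->
  (forall a, a <= y -> RInt f a y <= U) ->
  exists L, lim_at_minus_infty (fun a => RInt f a y) L /\ L <= U /\ (forall a, a <= y -> RInt f a y <= L).
Proof.
intros Hf Hp HU.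
set (E := fun v => exists a, a <= y /\ v = RInt f a y).
assert (Hb: bound E) by (exists U; intros v [a [Ha ->]]; auto).
assert (Hne: exists v, E v) by (exists (RInt f y y); exists y; split; [lra|auto]).
destruct (completeness E Hb Hne) as [L [Lub Lle]].
exists L. split; [|split].
- intros eps He.
  destruct (classic (exists a0, a0 <= y /\ L - eps < RInt f a0 y)) as [[a0 [Ha0 Ha0']]|Hn].
  + exists a0. intros a Ha. assert (RInt f a0 y <= RInt f a y) by (apply RInt_mono_left; auto).
    assert (RInt f a y <= L) by (apply Lub; exists a; split; [lra|auto]).
    apply Rabs_def1; lra.
  + exfalso. assert (L <= L - eps); [|lra]. apply Lle. intros v [a [Ha ->]].
    apply Rnot_lt_le. intro C. apply Hn. eauto.
- apply Lle. intros v [a [Ha ->]]. auto.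
- intros a Ha. apply Lub. exists a; auto.
Qed.

Lemma lim_plus_exists (f:R->R) y U : ctn f -> (forall z, 0 <= f z) ->
  (forall a, y <= a -> RInt f y a <= U) ->
  exists L, lim_at_plus_infty (fun a => RInt f y a) L /\ L <= U /\ (forall a, y <= a -> RInt f y a <= L).
Proof.
intros Hf Hp HU.
set (E := fun v => exists a, y <= a /\ v = RInt f y a).
assert (Hb: bound E) by (exists U; intros v [a [Ha ->]]; auto).
assert (Hne: exists v, E v) by (exists (RInt f y y); exists y; split; [lra|auto]).
destruct (completeness E Hb Hne) as [L [Lub Lle]].
exists L. split; [|split].
- intros eps He.
  destruct (classic (exists a0, y <= a0 /\ L - eps < RInt f y a0)) as [[a0 [Ha0 Ha0']]|Hn].
  + exists a0. intros a Ha. assert (RInt f y a0 <= RInt f y a) by (apply RInt_mono_right; auto).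
    assert (RInt f y a <= L) by (apply Lub; exists a; split; [lra|auto]).
    apply Rabs_def1; lra.
  + exfalso. assert (L <= L - eps); [|lra]. apply Lle. intros v [a [Ha ->]].
    apply Rnot_lt_le. intro C. apply Hn. eauto.
- apply Lle. intros v [a [Ha ->]]. auto.
- intros a Ha. apply Lub. exists a; auto.
Qed.

Lemma lim_m_div g L Z : 0 < Z -> lim_at_minus_infty g L -> lim_at_minus_infty (fun a => g a / Z) (L / Z).
Proof.
intros HZ H eps He. destruct (H (eps * Z)) as [M HM]; [nra|]. exists M. intros a Ha.
specialize (HM a Ha). replace (g a / Z - L / Z) with ((g a - L) * / Z) by (field; lra).
rewrite Rabs_mult, Rabs_inv, (Rabs_right Z) by lra.
apply (Rmult_lt_reg_r Z); auto. field_simplify; lra.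
Qed.

Lemma ctn_id : ctn (fun x => x).
Proof. intros x; apply continuous_id. Qed.

Lemma ctn_Kexp K c p : ctn (fun z => K * exp (c*(z-p))).
Proof. apply ctn_mult; [apply ctn_const|]. apply ctn_exp. apply ctn_mult; [apply ctn_const|].
 apply (ctn_ext (fun z => z + - p)); [intros; ring|]. apply ctn_plus; [apply ctn_id|apply ctn_const]. Qed.

Lemma tail_minus f y p K c : ctn f -> p <= y -> 0 <= K -> 0 < c ->
  (forall z, p <= z <= y -> f z <= K) -> (forall z, z <= p -> f z <= K * exp (c*(z-p))) ->
  forall a, a <= y -> RInt f a y <= K*(y-p) + K/c.
Proof.
intros Hf py HK Hc H1 H2 a Ha.
assert (KC: 0 <= K / c) by (apply Rdiv_le_0_compat; lra).
destruct (Rle_dec p a).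
- assert (RInt f a y <= (y-a)*K) by (apply RInt_le_c; auto; intros; apply H1; lra). nra.
- rewrite <- (Chasles f a p y Hf).
  assert (RInt f p y <= (y-p)*K) by (apply RInt_le_c; auto; intros; apply H1; lra).
  assert (E: RInt (fun z => K * exp (c*(z-p))) a p = K/c * exp (c*(p-p)) - K/c*exp(c*(a-p))).
  { apply is_RInt_unique.
    apply (@is_RInt_derive R_CompleteNormedModule (fun z => K/c*exp(c*(z-p)))).
    - intros x _. auto_derive; auto. unfold Rminus. field. lra.
    - intros x _. exact (ctn_Kexp _ _ _ x). }
  assert (RInt f a p <= RInt (fun z => K * exp (c*(z-p))) a p).
  { apply RInt_le; try lra; try apply ctn_exR; auto.
    intros x. exact (ctn_Kexp _ _ _ x).
    intros; apply H2; lra. }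
  rewrite E in H0. replace (c*(p-p)) with 0 in H0 by ring. rewrite exp_0 in H0.
  assert (0 <= K / c * exp (c * (a - p))) by (apply Rmult_le_pos; auto; left; apply exp_pos).
  nra.
Qed.

Lemma tail_plus f y p K c : ctn f -> y <= p -> 0 <= K -> 0 < c ->
  (forall z, y <= z <= p -> f z <= K) -> (forall z, p <= z -> f z <= K * exp (-c*(z-p))) ->
  forall a, y <= a -> RInt f y a <= K*(p-y) + K/c.
Proof.
intros Hf py HK Hc H1 H2 a Ha.
assert (KC: 0 <= K / c) by (apply Rdiv_le_0_compat; lra).
destruct (Rle_dec a p).
- assert (RInt f y a <= (a-y)*K) by (apply RInt_le_c; auto; intros; apply H1; lra). nra.
- rewrite <- (Chasles f y p a Hf).
  assert (RInt f y p <= (p-y)*K) by (apply RInt_le_c; auto; intros; apply H1; lra).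
  assert (E: RInt (fun z => K * exp (-c*(z-p))) p a = (-K/c) * exp (-c*(a-p)) - (-K/c)*exp(-c*(p-p))).
  { apply is_RInt_unique.
    apply (@is_RInt_derive R_CompleteNormedModule (fun z => -K/c*exp(-c*(z-p)))).
    - intros x _. auto_derive; auto. unfold Rminus. field. lra.
    - intros x _. exact (ctn_Kexp _ _ _ x). }
  assert (RInt f p a <= RInt (fun z => K * exp (-c*(z-p))) p a).
  { apply RInt_le; try lra; try apply ctn_exR; auto.
    intros x. exact (ctn_Kexp _ _ _ x).
    intros; apply H2; lra. }
  rewrite E in H0. replace (-c*(p-p)) with 0 in H0 by ring. rewrite exp_0 in H0.
  assert (0 <= K / c * exp (-c * (a - p))) by (apply Rmult_le_pos; auto; left; apply exp_pos).
  replace (-K/c * exp (-c*(a-p))) with (- (K / c * exp (-c * (a - p)))) in H0 by (field; lra).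
  nra.
Qed.

Lemma ctn_prim f : ctn f -> ctn (fun y => RInt f 0 y).
Proof. intros H y. apply (@continuous_RInt_1 R_CompleteNormedModule f 0 y (fun z => RInt f 0 z)).
 apply filter_forall. intros z. apply (@RInt_correct R_CompleteNormedModule). apply ctn_exR; auto. Qed.

Lemma Rint_ext f g a b : (forall x, f x = g x) -> Rint f a b = Rint g a b.
Proof. intros E. rewrite (functional_extensionality f g E). reflexivity. Qed.

Lemma sgn_neg w : w < 0 -> sgn w = -1.
Proof. intros H. unfold sgn. destruct (Rlt_dec 0 w); [lra|]. destruct (Rlt_dec w 0); lra. Qed.
Lemma sgn_pos w : 0 < w -> sgn w = 1.
Proof. intros H. unfold sgn. destruct (Rlt_dec 0 w); lra. Qed.

Lemma lim_m_ext g1 g2 L : (forall a, g1 a = g2 a) -> lim_at_minus_infty g1 L -> lim_at_minus_infty g2 L.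
Proof. intros E H eps He. destruct (H eps He) as [M HM]. exists M. intros a Ha. rewrite <- E. auto. Qed.

Lemma abs_le2 x e : Rabs x <= e -> -e <= x <= e.
Proof. intros H. pose proof (Rle_abs x). pose proof (Rle_abs (-x)). rewrite Rabs_Ropp in *. lra. Qed.

Lemma exp_le x y : x <= y -> exp x <= exp y.
Proof. intros [H|H]; [left; apply exp_increasing; auto| subst; lra]. Qed.

Lemma xi_bounds (sigma : R -> R) (nu_lo nu_hi : R) :
  ctn sigma -> 0 < nu_lo -> nu_lo <= nu_hi ->
  (forall x, nu_lo <= Rabs (sigma x) <= nu_hi) ->
  forall (C A gamma : R), 1 <= C -> 0 < A -> 0 < gamma ->
  forall (y0 y1 ybar : R), y0 < y1 -> y1 < ybar ->
  forall b, in_Sigma C A gamma sigma b ->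
  let B := A + Rabs y0 + Rabs ybar + 1 in
  let Kg := 2*C*(1+B)/nu_lo^2 in
  forall x, y1 <= x <= ybar ->
   2*(x-y0)*(exp (-Kg)/nu_hi^2) <= xi sigma b y0 x <=
   2*(x-y0)*(exp (2*B*Kg)/nu_lo^2*(2*B + /(2*gamma))).
Proof.
intros Hsc Hlo Hlh Hs C A gamma HC HA Hg y0 y1 ybar H01 H1b b [Hbl [Hbg Hbt]] B Kg x Hx.
assert (HB: 1 <= B /\ Rabs y0 + 1 <= B /\ Rabs ybar + 1 <= B /\ A + 1 <= B).
{ unfold B. pose proof (Rabs_pos y0); pose proof (Rabs_pos ybar). lra. }
pose proof (Rle_abs y0) as Ay0. pose proof (Rle_abs ybar) as Ayb.
pose proof (Rabs_Ropp y0) as Ay0'. pose proof (Rle_abs (-y0)) as Ay0''.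
assert (Hs2: forall w, nu_lo^2 <= (sigma w)^2 <= nu_hi^2).
{ intros w. specialize (Hs w). rewrite <- (pow2_abs (sigma w)). split; apply pow_incr; lra. }
assert (Hs0: forall w, (sigma w)^2 <> 0) by (intros w; specialize (Hs2 w); nra).
assert (Hlo2: 0 < nu_lo^2) by nra.
assert (Hbc: ctn b) by (apply ll_cont; auto).
set (g := fun w => 2 * b w / (sigma w)^2).
assert (Hgc: ctn g).
{ unfold g. apply (ctn_ext (fun w => (2 * b w) * / ((sigma w)^2))); [intros; reflexivity|].
  apply ctn_mult. apply ctn_mult; [apply ctn_const|auto].
  apply ctn_inv; auto. apply (ctn_ext (fun w => sigma w * (sigma w * 1))); [intros; reflexivity|].
  apply ctn_mult; auto. apply ctn_mult; auto. apply ctn_const. }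
assert (HKg: 0 <= Kg).
{ unfold Kg. apply Rdiv_le_0_compat; [|lra]. nra. }
assert (gabs: forall w, -B <= w <= B -> Rabs (g w) <= Kg).
{ intros w Hw. unfold g, Kg. specialize (Hs2 w).
  unfold Rdiv. rewrite !Rabs_mult, Rabs_inv, (Rabs_right 2), (Rabs_right ((sigma w)^2)) by nra.
  assert (Rabs (b w) <= C*(1+B)).
  { eapply Rle_trans; [apply Hbg|]. apply Rmult_le_compat_l; [lra|].
    assert (Rabs w <= B) by (apply Rabs_le; lra). lra. }
  assert (/ (sigma w)^2 <= / nu_lo^2) by (apply Rinv_le_contravar; lra).
  assert (0 <= / (sigma w)^2) by (left; apply Rinv_0_lt_compat; lra).
  pose proof (Rabs_pos (b w)).
  assert (2 * Rabs (b w) * / (sigma w)^2 <= 2 * (C*(1+B)) * / nu_lo ^2).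
  { apply Rmult_le_compat; nra. }
  lra. }
assert (gneg: forall w, w < -B -> 2*gamma <= g w).
{ intros w Hw. assert (A < Rabs w) by (rewrite Rabs_left by lra; lra).
  specialize (Hbt w H). rewrite sgn_neg in Hbt by lra. unfold g.
  replace (2 * b w / sigma w ^ 2) with (2 * (b w / sigma w ^ 2)) by (unfold Rdiv; ring). lra. }
assert (gpos: forall w, B < w -> g w <= -2*gamma).
{ intros w Hw. assert (A < Rabs w) by (rewrite Rabs_right by lra; lra).
  specialize (Hbt w H). rewrite sgn_pos in Hbt by lra. unfold g.
  replace (2 * b w / sigma w ^ 2) with (2 * (b w / sigma w ^ 2)) by (unfold Rdiv; ring). lra. }
set (G := fun x => RInt g 0 x).
assert (Gd: forall u v, G v - G u = RInt g u v).
{ intros u v. unfold G. rewrite <- (Chasles g 0 u v Hgc). ring. }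
assert (Gb: forall u v, -B <= u <= v -> v <= B -> Rabs (G v - G u) <= (v - u) * Kg).
{ intros u v Hu Hv. rewrite Gd. apply abs_RInt_le_const; try lra. apply ctn_exR; auto.
  intros; apply gabs; lra. }
assert (Gm: forall z, z <= -B -> G z <= G (-B) + 2*gamma*(z+B)).
{ intros z Hz. assert ((-B - z)*(2*gamma) <= RInt g z (-B)).
  { apply RInt_ge_c; auto. intros; apply gneg; lra. }
  rewrite <- Gd in H. lra. }
assert (Gp: forall z, B <= z -> G z <= G B - 2*gamma*(z-B)).
{ intros z Hz. assert (RInt g B z <= (z - B)*(-2*gamma)).
  { apply RInt_le_c; auto. intros; apply gpos; lra. }
  rewrite <- Gd in H. lra. }
assert (G0: G 0 = 0) by (unfold G; rewrite RInt_point; reflexivity).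
assert (HGc: ctn G) by (apply ctn_prim; auto).
set (ru := fun x => / (sigma x)^2 * exp (G x)).
assert (Eru: forall x, rho_unnorm sigma b x = ru x).
{ intros y. unfold rho_unnorm, ru. rewrite Rint_RInt; auto. }
assert (Erun: rho_unnorm sigma b = ru) by (apply functional_extensionality; auto).
assert (Hruc: ctn ru).
{ unfold ru. apply ctn_mult. apply ctn_inv; auto.
  apply (ctn_ext (fun w => sigma w * (sigma w * 1))); [intros; reflexivity|].
  apply ctn_mult; auto. apply ctn_mult; auto. apply ctn_const. apply ctn_exp; auto. }
assert (rub: forall z, exp (G z) / nu_hi^2 <= ru z <= exp (G z) / nu_lo^2).
{ intros z. unfold ru. specialize (Hs2 z). pose proof (exp_pos (G z)).
  unfold Rdiv. rewrite (Rmult_comm (/ _)). split; apply Rmult_le_compat_l; try lra;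
  apply Rinv_le_contravar; lra. }
assert (rup: forall z, 0 < ru z).
{ intros z. unfold ru. apply Rmult_lt_0_compat; [apply Rinv_0_lt_compat; specialize (Hs2 z); lra| apply exp_pos]. }
assert (rup': forall z, 0 <= ru z) by (intros; left; auto).
assert (MB: forall y, -B <= y <= B -> forall a, a <= y ->
   RInt ru a y <= exp (G y + 2*B*Kg)/nu_lo^2 * (2*B + /(2*gamma))).
{ intros y Hy a Ha.
  set (K := exp (G y + 2*B*Kg)/nu_lo^2).
  assert (HK: 0 <= K) by (unfold K; apply Rdiv_le_0_compat; [left; apply exp_pos|lra]).
  eapply Rle_trans.
  - apply (tail_minus ru y (-B) K (2*gamma)); auto; try lra.
    + intros z Hz. eapply Rle_trans; [apply rub|]. unfold K. unfold Rdiv.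
      apply Rmult_le_compat_r; [left; apply Rinv_0_lt_compat; lra|].
      apply exp_le. pose proof (Gb z y ltac:(lra) ltac:(lra)).
      apply abs_le2 in H. nra.
    + intros z Hz. eapply Rle_trans; [apply rub|]. unfold K. unfold Rdiv.
      rewrite Rmult_assoc, (Rmult_comm (/ _)), <- Rmult_assoc, <- exp_plus.
      apply Rmult_le_compat_r; [left; apply Rinv_0_lt_compat; lra|].
      apply exp_le. pose proof (Gb (-B) y ltac:(lra) ltac:(lra)).
      apply abs_le2 in H. pose proof (Gm z Hz). nra.
  - unfold Rdiv. assert (0 < / (2*gamma)) by (apply Rinv_0_lt_compat; lra). nra. }
assert (PB: forall a, 0 <= a -> RInt ru 0 a <= exp (B*Kg)/nu_lo^2 * (B + /(2*gamma))).
{ intros a Ha.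
  set (K := exp (B*Kg)/nu_lo^2).
  assert (HK: 0 <= K) by (unfold K; apply Rdiv_le_0_compat; [left; apply exp_pos|lra]).
  eapply Rle_trans.
  - apply (tail_plus ru 0 B K (2*gamma)); auto; try lra.
    + intros z Hz. eapply Rle_trans; [apply rub|]. unfold K. unfold Rdiv.
      apply Rmult_le_compat_r; [left; apply Rinv_0_lt_compat; lra|].
      apply exp_le. pose proof (Gb 0 z ltac:(lra) ltac:(lra)).
      apply abs_le2 in H. rewrite G0 in H. nra.
    + intros z Hz. eapply Rle_trans; [apply rub|]. unfold K. unfold Rdiv.
      rewrite Rmult_assoc, (Rmult_comm (/ _)), <- Rmult_assoc, <- exp_plus.
      apply Rmult_le_compat_r; [left; apply Rinv_0_lt_compat; lra|].
      apply exp_le. pose proof (Gb 0 B ltac:(lra) ltac:(lra)).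
      apply abs_le2 in H. rewrite G0 in H. pose proof (Gp z Hz). nra.
  - unfold Rdiv. lra. }
destruct (lim_minus_exists ru 0 _ Hruc rup' (MB 0 ltac:(lra))) as [Lm0 [HLm0 [_ HLm0']]].
destruct (lim_plus_exists ru 0 _ Hruc rup' PB) as [Lp0 [HLp0 [_ HLp0']]].
assert (EZ: C_bsigma sigma b = Lm0 + Lp0).
{ unfold C_bsigma, Rint_R. rewrite Erun. rewrite (Rint_minf_eq ru 0 Lm0), (Rint_pinf_eq ru 0 Lp0); auto. }
assert (HZ: 0 < C_bsigma sigma b).
{ rewrite EZ. specialize (HLm0' (-1) ltac:(lra)). specialize (HLp0' 0 ltac:(lra)).
  rewrite RInt_point in HLp0'.
  assert (0 < RInt ru (-1) 0). { apply RInt_gt_0; try lra. intros; auto. intros; apply Hruc. }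
  change (@zero R_CompleteNormedModule) with 0 in HLp0'. lra. }
set (Lm := fun y => Lm0 + RInt ru 0 y).
assert (HLm: forall y, lim_at_minus_infty (fun a => RInt ru a y) (Lm y)).
{ intros y eps He. destruct (HLm0 eps He) as [M HM]. exists M. intros a Ha.
  rewrite <- (Chasles ru a 0 y Hruc). unfold Lm.
  replace (RInt ru a 0 + RInt ru 0 y - (Lm0 + RInt ru 0 y)) with (RInt ru a 0 - Lm0) by ring. auto. }
assert (Hrhoc: ctn (rho sigma b)).
{ apply (ctn_ext (fun x => ru x * / C_bsigma sigma b)).
  intros; unfold rho; rewrite Eru; reflexivity. apply ctn_mult; auto. apply ctn_const. }
assert (Erm: forall y, Rint_minf (rho sigma b) y = Lm y / C_bsigma sigma b).
{ intros y. apply Rint_minf_eq; auto. apply (lim_m_ext (fun a => RInt ru a y / C_bsigma sigma b)).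
  intros a. unfold rho. rewrite Erun. symmetry; apply RInt_div; auto.
  apply lim_m_div; auto. }
assert (Lmc: ctn Lm) by (unfold Lm; apply ctn_plus; [apply ctn_const| apply ctn_prim; auto]).
assert (LmU: forall y, -B <= y <= B -> Lm y <= exp (G y + 2*B*Kg)/nu_lo^2 * (2*B + /(2*gamma))).
{ intros y Hy. destruct (lim_minus_exists ru y _ Hruc rup' (MB y Hy)) as [L [HL [HL1 _]]].
  rewrite <- (lim_m_unique _ _ _ HL (HLm y)). auto. }
assert (LmL: forall y, -B <= y - 1 -> y <= B -> exp (G y - Kg)/nu_hi^2 <= Lm y).
{ intros y Hy1 Hy2. destruct (lim_minus_exists ru y _ Hruc rup' (MB y ltac:(lra))) as [L [HL [_ HL2]]].
  rewrite <- (lim_m_unique _ _ _ HL (HLm y)).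
  eapply Rle_trans; [|apply (HL2 (y-1)); lra].
  replace (exp (G y - Kg) / nu_hi ^ 2) with ((y - (y-1)) * (exp (G y - Kg) / nu_hi ^ 2)) by ring.
  apply RInt_ge_c; auto; try lra. intros z Hz.
  eapply Rle_trans; [|apply rub]. unfold Rdiv. apply Rmult_le_compat_r.
  left; apply Rinv_0_lt_compat; nra. apply exp_le.
  pose proof (Gb z y ltac:(lra) ltac:(lra)). apply abs_le2 in H. nra. }
assert (Hfun: forall y, / ((sigma y)^2 * rho sigma b y) * Rint_minf (rho sigma b) y = Lm y * exp (- G y)).
{ intros y. rewrite Erm. unfold rho. rewrite Eru. unfold ru. rewrite exp_Ropp.
  pose proof (exp_pos (G y)). field. split; [lra|split; [lra|]]. intro E; apply (Hs0 y); rewrite E; ring. }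
unfold xi. rewrite (Rint_ext _ (fun y => Lm y * exp (- G y)) y0 x Hfun).
assert (Hc': ctn (fun y => Lm y * exp (- G y))) by (apply ctn_mult; auto; apply ctn_exp; apply ctn_opp; auto).
rewrite Rint_RInt by auto.
split.
- rewrite Rmult_assoc. apply Rmult_le_compat_l; [lra|]. apply RInt_ge_c; auto; try lra.
  intros y Hy. eapply Rle_trans; [|apply Rmult_le_compat_r; [left; apply exp_pos| apply LmL; lra]].
  replace (G y - Kg) with (G y + - Kg) by ring. rewrite exp_plus. rewrite !exp_Ropp.
  pose proof (exp_pos (G y)). pose proof (exp_pos Kg). right. field. split; [lra|]. split; [nra|lra].
- rewrite Rmult_assoc. apply Rmult_le_compat_l; [lra|]. apply RInt_le_c; auto; try lra.
  intros y Hy. eapply Rle_trans; [apply Rmult_le_compat_r; [left; apply exp_pos| apply LmU; lra]|].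
  rewrite exp_plus, !exp_Ropp.
  pose proof (exp_pos (G y)). right. field. split; [lra|]. nra.
Qed.

Theorem lemma4p1 :
  forall (sigma : R -> R) (nu_lo nu_hi : R),
    locally_lipschitz sigma ->
    0 < nu_lo -> nu_lo <= nu_hi ->
    (forall x, nu_lo <= Rabs (sigma x) <= nu_hi) ->
  forall (C A gamma : R),
    1 <= C -> 0 < A -> 0 < gamma ->
  forall (y0 y1 ybar : R),
    y0 < y1 -> y1 < ybar ->
  exists M1 M2 : R,
    0 < M1 /\ M1 <= M2 /\
    forall b : R -> R, in_Sigma C A gamma sigma b ->
    forall x : R, y1 <= x <= ybar ->
      M1 <= xi sigma b y0 x <= M2.
Proof.
intros sigma nu_lo nu_hi Hl Hlo Hlh Hs C A gamma HC HA Hg y0 y1 ybar H01 H1b.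
set (B := A + Rabs y0 + Rabs ybar + 1).
set (Kg := 2*C*(1+B)/nu_lo^2).
set (mH := exp (-Kg)/nu_hi^2).
set (MH := exp (2*B*Kg)/nu_lo^2*(2*B + /(2*gamma))).
assert (HmH: 0 < mH) by (unfold mH; apply Rdiv_lt_0_compat; [apply exp_pos| nra]).
assert (HMH: 0 <= MH).
{ unfold MH. assert (1 <= B) by (unfold B; pose proof (Rabs_pos y0); pose proof (Rabs_pos ybar); lra).
  assert (0 < /(2*gamma)) by (apply Rinv_0_lt_compat; lra).
  apply Rmult_le_pos; [apply Rdiv_le_0_compat; [left; apply exp_pos|nra]|lra]. }
exists (2*(y1-y0)*mH), (Rmax (2*(y1-y0)*mH) (2*(ybar-y0)*MH)).
split; [nra|split; [apply Rmax_l|]].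
intros b Hb x Hx.
pose proof (xi_bounds sigma nu_lo nu_hi (ll_cont _ Hl) Hlo Hlh Hs C A gamma HC HA Hg y0 y1 ybar H01 H1b b Hb x Hx) as [L U].
fold B Kg mH MH in L, U. split.
- eapply Rle_trans; [|exact L]. nra.
- eapply Rle_trans; [exact U|]. eapply Rle_trans; [|apply Rmax_r]. nra.
Qed.
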